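(* Let $G$ be a finite nonabelian group having a self-normalising subgroup $S$ (i.e. $N_G(S)=S$) of index $[G:S]=4$. Then $\beta(G)\ge \frac{3}{2}|G|$.
   Context: For a nonempty subset $X$ of a group $G$, $Q(X):=\{xy^{-1}: x,y\in X\}$. Nonempty subsets $S_1,S_2,S_3$ of $G$ satisfy the Triple Product Property (TPP) if for all $s_i\in Q(S_i)$: $s_1s_2s_3=1$ iff $s_1=s_2=s_3=1$. A group $G$ realizes $\langle n,p,m\rangle$ if there are subsets $S_1,S_2,S_3\subseteq G$ with $|S_1|=n$, $|S_2|=p$, $|S_3|=m$ satisfying the TPP. For a nontrivial finite group $G$, the TPP capacity is $\beta(G):=\max\{npm : G \text{ realizes } \langle n,p,m\rangle\}$. *)

(* Defs.v *)
From mathcomp Require Import all_boot all_fingroup.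
Set Implicit Arguments. Unset Strict Implicit. Unset Printing Implicit Defensive.
Local Open Scope group_scope.

Definition Qset (gT : finGroupType) (X : {set gT}) : {set gT} :=
  [set x * y^-1 | x in X, y in X].

Definition TPP (gT : finGroupType) (S1 S2 S3 : {set gT}) : bool :=
  [&& S1 != set0, S2 != set0, S3 != set0 &
   [forall s1 in Qset S1, forall s2 in Qset S2, forall s3 in Qset S3,
      (s1 * s2 * s3 == 1) == [&& s1 == 1, s2 == 1 & s3 == 1]]].

Definition realizes (gT : finGroupType) (G : {group gT}) (n p m : nat) : bool :=
  [exists S1 : {set gT}, exists S2 : {set gT}, exists S3 : {set gT},
    [&& S1 \subset G, S2 \subset G, S3 \subset G,
        #|S1| == n, #|S2| == p, #|S3| == m & TPP S1 S2 S3]].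

(* TPP capacity: max of n p m over realized triples (sizes are at most |G|). *)
Definition beta (gT : finGroupType) (G : {group gT}) : nat :=
  \max_(n < #|G|.+1) \max_(p < #|G|.+1) \max_(m < #|G|.+1)
     (if realizes G n p m then n * p * m else 0).

(* Main.v *)
Require Import Defs.
From mathcomp Require Import all_boot all_fingroup.
From mathcomp Require Import zify.
Set Implicit Arguments. Unset Strict Implicit. Unset Printing Implicit Defensive.
Local Open Scope group_scope.

Lemma card_disjU (T : finType) (A B : {set T}) :
  (forall u, u \in A -> u \in B -> False) -> #|A :|: B| = #|A| + #|B|.
Proof.
move=> H; rewrite cardsU.
have -> : A :&: B = set0.
  by apply/setP=> u; rewrite inE in_set0; apply/negbTE/andP=> [[/H]].
by rewrite cards0 subn0.
Qed.

Section Pf.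
Variables (gT : finGroupType) (G S : {group gT}).
Hypotheses (sSG : S \subset G) (nS : 'N_G(S) = S) (iS : #|G : S| = 4).

Definition D g := (S * S :^ g^-1) :* g.

Lemma memD g u : reflect (exists s1, exists s2, [/\ s1 \in S, s2 \in S & u = s1 * g * s2]) (u \in D g).
Proof.
apply: (iffP idP).
- case/rcosetP => v /mulsgP [s1 t s1S tS ->] -> {u v}.
  exists s1, (t ^ g); split => //.
  + by rewrite -mem_conjgV.
  + by rewrite conjgE !mulgA mulgK.
- case=> s1 [s2 [s1S s2S ->]].
  rewrite mem_rcoset.
  have -> : s1 * g * s2 * g^-1 = s1 * (s2 ^ g^-1) by rewrite conjgE invgK !mulgA.
  by rewrite mem_mulg // memJ_conjg.
Qed.

Lemma cardD g : #|D g| = #|S * S :^ g^-1|.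
Proof. by rewrite card_rcoset. Qed.

Lemma DsubG g : g \in G -> D g \subset G.
Proof.
move=> gG; apply/subsetP=> u /memD [s1 [s2 [h1 h2 ->]]].
by rewrite !groupM // (subsetP sSG).
Qed.

Lemma cardS_pos : 0 < #|S|.
Proof. by rewrite cardG_gt0. Qed.

Lemma cardG4 : #|G| = (4 * #|S|)%N.
Proof. by rewrite -(Lagrange sSG) iS mulnC. Qed.

Lemma mul_card_big g : g \in G -> g \notin S ->
  (#|S| * #|S| = #|(S * S :^ g^-1)%g| * #|S :&: S :^ g^-1|)%N /\
  #|S :&: S :^ g^-1| %| #|S| /\ #|S :&: S :^ g^-1| < #|S|.
Proof.
move=> gG gS.
split; first by rewrite -{2}(cardJg S g^-1) mul_cardG.
split; first by rewrite (cardSg (subsetIl _ _)).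
rewrite ltn_neqAle subset_leq_card ?subsetIl // andbT.
apply/negP=> /eqP E.
have e1 : S :&: S :^ g^-1 = S by apply/eqP; rewrite eqEcard subsetIl E leqnn.
have e2 : S :^ g^-1 = S.
  apply/eqP; rewrite eq_sym eqEcard cardJg leqnn andbT -{1}e1; exact: subsetIr.
have : g^-1 \in 'N_G(S) by rewrite inE groupV gG; apply/normP.
by rewrite nS groupV (negbTE gS).
Qed.

Lemma Dbig g : g \in G -> g \notin S -> (2 * #|S| <= #|D g|)%N.
Proof.
move=> gG gS; rewrite cardD.
have [E [/dvdnP [q Hq] lt]] := mul_card_big gG gS.
move: E lt; rewrite Hq.
move: (#|(S * S :^ g^-1)%g|) (#|S :&: S :^ g^-1|) (cardG_gt0 (S :&: S :^ g^-1)) => m k kp E lt.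
have q2 : 2 <= q by nia.
nia.
Qed.

Lemma factA g h : g \in G -> g \notin S -> h \in G -> h \notin S -> h \in D g.
Proof.
move=> gG gS hG hS; apply: contraT => hD.
have d1 : forall u, u \in S -> u \in D g -> False.
  move=> u uS /memD [s1 [s2 [h1 h2 E]]].
  have : g = s1^-1 * u * s2^-1 by rewrite E !mulgA mulgK mulVg mul1g.
  by move=> Eg; move: gS; rewrite Eg !groupM ?groupV.
have d2 : forall u, u \in S -> u \in D h -> False.
  move=> u uS /memD [s1 [s2 [h1 h2 E]]].
  have : h = s1^-1 * u * s2^-1 by rewrite E !mulgA mulgK mulVg mul1g.
  by move=> Eg; move: hS; rewrite Eg !groupM ?groupV.
have d3 : forall u, u \in S :|: D g -> u \in D h -> False.
  move=> u; rewrite inE => /orP [uS|]; first exact: d2.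
  move=> /memD [s1 [s2 [h1 h2 E]]] /memD [s3 [s4 [h3 h4 E']]].
  move/negP: hD; apply; apply/memD.
  exists (s3^-1 * s1), (s2 * s4^-1); split; rewrite ?groupM ?groupV //.
  have : h = s3^-1 * u * s4^-1 by rewrite E' !mulgA mulgK mulVg mul1g.
  by move=> ->; rewrite E !mulgA.
have sub : S :|: D g :|: D h \subset G by rewrite !subUset sSG !DsubG.
have := subset_leq_card sub.
rewrite card_disjU // card_disjU // cardG4.
have := Dbig gG gS; have := Dbig hG hS; have := cardS_pos.
lia.
Qed.

Lemma exg : exists2 g, g \in G & g \notin S.
Proof.
apply/exists_inP; rewrite -negb_forall_in; apply/negP => /forall_inP H.
have : G \subset S by apply/subsetP=> u /H.
move/subset_leq_card; rewrite cardG4; have := cardS_pos; lia.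
Qed.

Lemma exx : exists x, [/\ x \in G, x \notin S & x * x \in S].
Proof.
have [g gG gS] := exg.
have gVS : g^-1 \notin S by rewrite groupV.
have /memD [s1 [s2 [h1 h2 E]]] := factA gG gS (groupVr gG) gVS.
have E2 : g * s1 * g * s2 = 1 by rewrite -!mulgA (mulgA s1) -E mulgV.
have E3 : g * s1 * g = s2^-1 by rewrite -[LHS](mulgK s2) E2 mul1g.
exists (s1 * g); split.
- by rewrite groupM // (subsetP sSG).
- by apply: contra gS => H; rewrite -(mulKg s1 g) groupM ?groupV.
- by rewrite -mulgA (mulgA g s1 g) E3 groupM ?groupV.
Qed.

Lemma eyz x : x \in G -> x \notin S ->
  exists y, exists z, [/\ y \in S :^ x, z \in S :^ x, y \notin S, z \notin S & y * z^-1 \notin S].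
Proof.
move=> xG xS.
have xVG : x^-1 \in G by rewrite groupV.
have xVS : x^-1 \notin S by rewrite groupV.
have [E _] := mul_card_big xVG xVS.
rewrite invgK in E.
have big : (3 * #|S| <= #|(S * S :^ x)%g|)%N.
  have sub : G :\: S \subset D x^-1.
    by apply/subsetP=> u; rewrite inE => /andP [uS uG]; apply: factA.
  have := subset_leq_card sub; rewrite cardD invgK cardsD.
  rewrite (setIidPr sSG) cardG4; lia.
have k3 : (3 * #|S :&: S :^ x| <= #|S|)%N.
  move: E big; move: (#|(S * S :^ x)%g|) (#|S :&: S :^ x|) (cardS_pos) => m k nS0 E big.
  nia.
have kp := cardG_gt0 (S :&: S :^ x).
have [y yH yS] : exists2 y, y \in S :^ x & y \notin S.
  apply/exists_inP; rewrite -negb_forall_in; apply/negP => /forall_inP H.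
  have : S :^ x \subset S by apply/subsetP=> u /H.
  move/setIidPr => e; have h : #|S :&: S :^ x| = #|S| by rewrite e cardJg.
  move: k3; rewrite h; have := cardS_pos; lia.
have [z zH zS] : exists2 z, z \in S :^ x & z \notin S :|: S :* y.
  apply/exists_inP; rewrite -negb_forall_in; apply/negP => /forall_inP H.
  have sub : S :^ x \subset (S :&: S :^ x) :|: ((S :^ x :&: S :* y) :* y^-1 :* y).
    apply/subsetP=> u uH; have := H u uH; rewrite !inE => /orP [->|uy].
      by rewrite uH.
    by rewrite orbC rcosetKV inE uH uy.
  have c2 : (#|(S :^ x :&: S :* y) :* y^-1 :* y| <= #|S :&: S :^ x|)%N.
    rewrite card_rcoset; apply: subset_leq_card; apply/subsetP => v.
    rewrite mem_rcoset invgK !inE => /andP [vH]; rewrite mem_rcoset => vS.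
    rewrite mulgK in vS; by rewrite vS -(mulgK y v) groupM // groupV.
  have h1 := subset_leq_card sub.
  have h2 := leq_card_setU (S :&: S :^ x) ((S :^ x :&: S :* y) :* y^-1 :* y).
  case: h2 => /= h2 _.
  have hS : #|S :^ x| = #|S| by rewrite cardJg.
  have h3 : (#|S| <= #|S :&: S :^ x| + #|S :&: S :^ x|)%N.
    by rewrite -hS (leq_trans h1 (leq_trans h2 _)) // leq_add2l.
  move: h3 k3 kp; move: (#|S|) (#|S :&: S :^ x|) => a b; lia.
exists y, z; split => //.
- by move: zS; rewrite inE negb_or => /andP [].
- apply: contra zS => yz; rewrite inE mem_rcoset orbC.
  by rewrite -groupV invMg invgK yz.
Qed.

Lemma key x s1 s2 s3 : x \notin S -> x * x \in S -> s1 \in S ->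
  [\/ s2 = 1, s2 = x | s2 = x^-1] -> s3 \in S :^ x -> (s3 \in S -> s3 = 1) ->
  s1 * s2 * s3 = 1 -> [&& s1 == 1, s2 == 1 & s3 == 1].
Proof.
move=> xS xxS s1S hs2 s3H h3 E.
have tS : s3 ^ x^-1 \in S by rewrite -mem_conjg.
case: hs2 => -> in E *.
- move: E; rewrite mulg1 => E.
  have e3 : s3 = s1^-1 by rewrite -[s3]mul1g -(mulVg s1) -mulgA E mulg1.
  have s3S : s3 \in S by rewrite e3 groupV.
  move: (h3 s3S) => e; rewrite e mulg1 in E; by rewrite E e !eqxx.
- have : x^-1 = s1 * (s3 ^ x^-1) by rewrite conjgE invgK !mulgA E mul1g.
  move=> e; have : x^-1 \in S by rewrite e groupM.
  by rewrite groupV (negbTE xS).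
- have : x^-1 = s1 * (x * x)^-1 * (s3 ^ x^-1).
    by rewrite conjgE invgK invMg !mulgA mulgKV E mul1g.
  move=> e; have : x^-1 \in S by rewrite e; exact: (groupM (groupM s1S (groupVr xxS)) tS).
  by rewrite groupV (negbTE xS).
Qed.

Lemma tpp x y z : x \notin S -> x * x \in S -> y \in S :^ x -> z \in S :^ x ->
  y \notin S -> z \notin S -> y * z^-1 \notin S -> TPP S [set 1; x] [set 1; y; z].
Proof.
move=> xS xxS yH zH yS zS yzS.
rewrite /TPP; apply/and4P; split.
- by apply/set0Pn; exists 1.
- by apply/set0Pn; exists 1; rewrite !inE eqxx.
- by apply/set0Pn; exists 1; rewrite !inE eqxx.
apply/forallP => s1; apply/implyP => /imset2P [a b aS bS ->].
apply/forallP => s2; apply/implyP => /imset2P [c d cS dS ->].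
apply/forallP => s3; apply/implyP => /imset2P [e f eS fS ->].
apply/eqP; apply/idP/idP.
- move/eqP; apply: (key (x:=x)) => //.
  + by rewrite groupM ?groupV.
  + by move: cS dS; rewrite !inE => /orP [] /eqP -> /orP [] /eqP ->;
      rewrite ?invg1 ?mulg1 ?mul1g ?mulgV; [constructor 1|constructor 3|constructor 2|constructor 1].
  + by move: eS fS; rewrite !inE => /orP [/orP [] | ] /eqP -> /orP [/orP [] | ] /eqP ->;
      rewrite ?invg1 ?mulg1 ?mul1g ?groupM ?groupV.
  + move: eS fS; rewrite !inE => /orP [/orP [] | ] /eqP -> /orP [/orP [] | ] /eqP ->;
      rewrite ?invg1 ?mulg1 ?mul1g ?mulgV ?groupV //; move=> h; exfalso; move: h;
      solve [ rewrite (negbTE yS) // | rewrite (negbTE zS) // | rewrite (negbTE yzS) //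
            | rewrite -groupV invMg invgK (negbTE yzS) // ].
- by case/and3P => /eqP -> /eqP -> /eqP ->; rewrite !mulg1.
Qed.

End Pf.

Local Open Scope nat_scope.
Lemma beta_ge (gT : finGroupType) (G : {group gT}) n p m :
  n <= #|G| -> p <= #|G| -> m <= #|G| -> realizes G n p m -> n * p * m <= beta G.
Proof.
move=> hn hp hm hr; rewrite /beta.
have hn' : n < #|G|.+1 by []. have hp' : p < #|G|.+1 by []. have hm' : m < #|G|.+1 by [].
apply: (leq_trans _ (@leq_bigmax _ (fun i : 'I_#|G|.+1 => \max_(p0 < #|G|.+1) \max_(m0 < #|G|.+1)
   (if realizes G i p0 m0 then i * p0 * m0 else 0)) (Ordinal hn'))) => /=.
apply: (leq_trans _ (@leq_bigmax _ (fun i : 'I_#|G|.+1 => \max_(m0 < #|G|.+1)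
   (if realizes G n i m0 then n * i * m0 else 0)) (Ordinal hp'))) => /=.
have := @leq_bigmax _ (fun i : 'I_#|G|.+1 =>
   (if realizes G n p i then n * p * i else 0)) (Ordinal hm').
by rewrite /= hr.
Qed.

Theorem mainTheorem5 (gT : finGroupType) (G S : {group gT}) :
  ~~ abelian G -> S \subset G -> ('N_G(S))%g = S -> #|G : S|%g = 4 ->
  3 * #|G| <= 2 * beta G.
Proof.
move=> _ sSG nS iS.
have [x [xG xS xxS]] := exx sSG nS iS.
have [y [z [yH zH yS zS yzS]]] := eyz sSG nS iS xG xS.
have hT := tpp xS xxS yH zH yS zS yzS.
have x1 : x != 1%g by apply: contraNneq xS => ->; rewrite group1.
have c2 : #|[set 1%g; x]| = 2 by rewrite cards2 eq_sym x1.
have c3 : #|[set 1%g; y; z]| = 3.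
  rewrite -setUA cardsU1 cards2 !inE.
  have -> : (y == z) = false by apply/negbTE; apply: contra yzS => /eqP ->; rewrite mulgV group1.
  have -> : (1%g == y) = false by apply/negbTE; apply: contraNneq yS => <-; rewrite group1.
  have -> : (1%g == z) = false by apply/negbTE; apply: contraNneq zS => <-; rewrite group1.
  by [].
have G4 := cardG4 sSG iS.
have n0 := cardS_pos S.
have inG : forall u, u \in S :^ x -> u \in G.
  move=> u; rewrite mem_conjg => uS.
  by rewrite -(conjgKV x u) groupJ // (subsetP sSG).
have r : realizes G #|S| 2 3.
  apply/existsP; exists (S : {set gT}); apply/existsP; exists [set 1%g; x].
  apply/existsP; exists [set 1%g; y; z].
  rewrite sSG c2 c3 !eqxx hT !andbT.
  apply/and3P; split; [done| |].
    apply/subsetP => u; rewrite !inE.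
    by case/orP => /eqP ->; rewrite ?group1.
  apply/subsetP => u; rewrite !inE.
  by case/orP => [/orP [] | ] /eqP ->; rewrite ?group1 ?inG.
have h1 : #|S| <= #|G| by rewrite G4 leq_pmull.
have h4 : 4 <= #|G| by rewrite G4 leq_pmulr.
have h2 : 2 <= #|G| by apply: leq_trans h4.
have h3 : 3 <= #|G| by apply: leq_trans h4.
have := beta_ge h1 h2 h3 r.
rewrite G4 -(leq_pmul2l (isT : 0 < 2)).
have -> : 2 * (#|S| * 2 * 3) = 3 * (4 * #|S|) by move: (#|S|) => a; lia.
done.
Qed.
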